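(* Let $T$ be a reduced linear trellis of length $n$. (1) If $S^1,\dots,S^r\le\mathbb{S}(T)$ are subspaces such that $\mathbb{S}_{\mathfrak{s}}(T)=\bigoplus_{i=1}^r\bigl(S^i\cap\mathbb{S}_{\mathfrak{s}}(T)\bigr)$ for every span $\mathfrak{s}$, then $S^i=\mathbb{S}(T(S^i))$ for every $i$, and there is a linear isomorphism $f:T\to\bigotimes_{i=1}^rT(S^i)$ mapping each subtrellis $T(S^i)$ onto the natural copy $0\otimes\cdots\otimes0\otimes T(S^i)\otimes0\otimes\cdots\otimes0$. (2) Conversely, if $T_1,\dots,T_r$ are linear trellises of length $n$ with $\sum_{i=1}^r\dim\mathbb{S}_{(a,0)}(T_i)\le1$ for all $a\in\mathbb{Z}_n$, and $f:T\to\bigotimes_{i=1}^rT_i$ is a linear isomorphism, then for every span $\mathfrak{s}$ $$\mathbb{S}_{\mathfrak{s}}(T)=\bigoplus_{i=1}^r\mathbb{S}_{\mathfrak{s}}\bigl(f^{-1}(0\otimes\cdots\otimes0\otimes T_i\otimes0\otimes\cdots\otimes0)\bigr).$$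
   Context: Let $\mathbb{F}$ be a finite field and $n\ge1$; indices are taken in $\mathbb{Z}_n$. A trellis $T$ of length $n$ over $\mathbb{F}$ consists of pairwise disjoint finite vertex sets $V_i(T)$, $i\in\mathbb{Z}_n$, and edge sets $E_i(T)\subseteq V_i(T)\times\mathbb{F}\times V_{i+1}(T)$; $(v,\alpha,w)\in E_i(T)$ is an edge from $v$ to $w$ with label $\alpha$. Trellises are trim (each vertex has an outgoing and an incoming edge). $T$ is linear if each $V_i(T)$ is an $\mathbb{F}$-vector space and each $E_i(T)$ a subspace. A cycle is a closed path of length $n$ starting in $V_0(T)$, identified with $(\mathbf{v},\boldsymbol{\alpha})\in\prod_iV_i(T)\times\mathbb{F}^n$; $\mathbb{S}(T)$ is the (linear) space of cycles. $T$ is reduced if every edge lies on a cycle. A linear subtrellis $T''\le T$ is a trim subgraph with $V_i(T'')\le V_i(T)$, $E_i(T'')\le E_i(T)$ subspaces; its cycles are cycles of $T$, so $\mathbb{S}(T'')\le\mathbb{S}(T)$. For $S\le\mathbb{S}(T)$, $T(S)$ is the subtrellis of $T$ consisting of all vertices and edges lying on some cycle in $S$. A linear isomorphism $f:T\to T'$ is a family of linear bijections $f_i:V_i(T)\to V_i(T')$ with $(v,\alpha,w)\in E_i(T)\iff(f_i(v),\alpha,f_{i+1}(w))\in E_i(T')$. The product $T\otimes T'$ has $V_i=V_i(T)\times V_i(T')$ and $E_i=\{((v,v'),\alpha+\alpha',(w,w')):(v,\alpha,w)\in E_i(T),(v',\alpha',w')\in E_i(T')\}$; products of several trellises are defined iteratively,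 and $0\otimes\cdots\otimes T_i\otimes\cdots\otimes0$ denotes the linear subtrellis of $\bigotimes_kT_k$ that is the image of $T_i$ under $v\mapsto(0,\dots,0,v,0,\dots,0)$. Spans: for $a\in\mathbb{Z}_n$, $0\le l\le n-1$, $[a,a+l]=\{a,\dots,a+l\}$, $(a,a+l]=[a,a+l]\setminus\{a\}$; $(a,l)$ is a span; also degenerate spans $\emptyset$ and $\mathbb{Z}_n$. A nondegenerate $(a,l)$ is a span of a cycle $(\mathbf{v},\boldsymbol{\alpha})$ if $\{i:v_i\ne0\}\subseteq(a,a+l]$ and $\{i:\alpha_i\ne0\}\subseteq[a,a+l]$; $\emptyset$ is a span only of the zero cycle and $\mathbb{Z}_n$ of every cycle. $\mathbb{S}_{\mathfrak{s}}(T)$ is the subspace of cycles having span $\mathfrak{s}$ (for a subtrellis, its cycles having span $\mathfrak{s}$). *)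

(* Defs.v *)
From HB Require Import structures.
From mathcomp Require Import all_boot all_order all_algebra.
Set Implicit Arguments. Unset Strict Implicit. Unset Printing Implicit Defensive.
Import GRing.Theory.
Local Open Scope ring_scope.

Section Trellis.
Variables (F : finFieldType) (n : nat).

(* indices are taken in Z_n, represented by 'I_n; i+1 is the cyclic successor *)
Definition succ (i : 'I_n) : 'I_n := ordS i.

Definition edgeT (vT : vectType F) := ((vT * F^o) * vT)%type.

(* A linear trellis: vertex spaces V_i and edge spaces E_i, all realized as
   subspaces of a common ambient F-vector space vT. *)
Record ltrellis (vT : vectType F) := LTrellis {
  tV : 'I_n -> {vspace vT};
  tE : 'I_n -> {vspace edgeT vT} }.

Section OneTrellis.
Variables (vT : vectType F) (T : ltrellis vT).

Definition wf_trellis : Prop :=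
  forall i v a w, (v, a, w) \in tE T i -> v \in tV T i /\ w \in tV T (succ i).

Definition trim : Prop :=
  (forall i v, v \in tV T i -> exists a w, (v, a, w) \in tE T i) /\
  (forall i w, w \in tV T (succ i) -> exists v a, (v, a, w) \in tE T i).

Definition is_trellis : Prop := wf_trellis /\ trim.

End OneTrellis.

(* the ambient space of cycles (v, alpha) in prod_i V_i x F^n *)
Definition cycT (vT : vectType F) := ({ffun 'I_n -> vT} * {ffun 'I_n -> F^o})%type.

Definition edge_at (vT : vectType F) (i : 'I_n) (c : cycT vT) : edgeT vT :=
  (c.1 i, c.2 i, c.1 (succ i)).

Definition vert_at (vT : vectType F) (i : 'I_n) (c : cycT vT) : vT := c.1 i.

Definition is_cycle (vT : vectType F) (T : ltrellis vT) (c : cycT vT) : Prop :=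
  forall i, edge_at i c \in tE T i.

Definition reduced (vT : vectType F) (T : ltrellis vT) : Prop :=
  forall i e, e \in tE T i -> exists c, is_cycle T c /\ edge_at i c = e.

Definition cycles (vT : vectType F) (T : ltrellis vT) : {vspace cycT vT} :=
  (\bigcap_(i < n) (linfun (@edge_at vT i) @^-1: tE T i))%VS.

Inductive tspan := SpEmpty | SpFull | SpInt of 'I_n & nat.

Definition valid_span (s : tspan) : Prop :=
  match s with SpInt _ l => (l < n)%N | _ => True end.

(* i \in [a, a+l]  and  i \in (a, a+l]  (indices mod n) *)
Definition in_cc (a : 'I_n) (l : nat) (i : 'I_n) : bool :=
  (((i + n - a) %% n) <= l)%N.
Definition in_oc (a : 'I_n) (l : nat) (i : 'I_n) : bool :=
  (0 < (i + n - a) %% n <= l)%N.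

Definition has_span (vT : vectType F) (s : tspan) (c : cycT vT) : Prop :=
  match s with
  | SpEmpty => c = 0
  | SpFull => True
  | SpInt a l => forall i, (c.1 i != 0 -> in_oc a l i) /\ (c.2 i != 0 -> in_cc a l i)
  end.

Definition outside (vT : vectType F) (a : 'I_n) (l : nat) (c : cycT vT) : cycT vT :=
  ([ffun i => if in_oc a l i then 0 else c.1 i],
   [ffun i => if in_cc a l i then 0 else c.2 i]).

Definition spanZ (vT : vectType F) (s : tspan) : {vspace cycT vT} :=
  match s with
  | SpEmpty => 0%VS
  | SpFull => fullv
  | SpInt a l => lker (linfun (@outside vT a l))
  end.

Definition Sspan (vT : vectType F) (s : tspan) (T : ltrellis vT) : {vspace cycT vT} :=
  (cycles T :&: spanZ vT s)%VS.

Definition tsub (vT : vectType F) (T : ltrellis vT) (S : {vspace cycT vT}) : ltrellis vT :=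
  LTrellis (fun i => (linfun (@vert_at vT i) @: S)%VS)
           (fun i => (linfun (@edge_at vT i) @: S)%VS).

Section Product.
Variables (vT : vectType F) (r : nat) (Ts : 'I_r -> ltrellis vT).

Definition combine (e : {ffun 'I_r -> edgeT vT}) : edgeT {ffun 'I_r -> vT} :=
  ([ffun k => (e k).1.1], \sum_(k < r) (e k).1.2, [ffun k => (e k).2]).

Definition prodT : ltrellis {ffun 'I_r -> vT} :=
  LTrellis
    (fun i => \bigcap_(k < r) (linfun (fun x : {ffun 'I_r -> vT} => x k) @^-1: tV (Ts k) i))%VS
    (fun i => linfun combine @:
       (\bigcap_(k < r) (linfun (fun e : {ffun 'I_r -> edgeT vT} => e k) @^-1: tE (Ts k) i)))%VS.

Definition inj_at (k : 'I_r) (v : vT) : {ffun 'I_r -> vT} :=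
  [ffun j => if j == k then v else 0].
Definition injE_at (k : 'I_r) (e : edgeT vT) : edgeT {ffun 'I_r -> vT} :=
  (inj_at k e.1.1, e.1.2, inj_at k e.2).

Definition copyT (k : 'I_r) : ltrellis {ffun 'I_r -> vT} :=
  LTrellis (fun i => (linfun (inj_at k) @: tV (Ts k) i)%VS)
           (fun i => (linfun (injE_at k) @: tE (Ts k) i)%VS).
End Product.

(* linear isomorphisms, given as families of linear maps f_i on the ambient
   spaces whose restrictions to V_i(T) are the bijections V_i(T) -> V_i(T') *)
Section Iso.
Variables (vT wT : vectType F).

Definition edge_map (f : 'I_n -> 'Hom(vT, wT)) (i : 'I_n) (e : edgeT vT) : edgeT wT :=
  (f i e.1.1, e.1.2, f (succ i) e.2).

Definition is_liso (T : ltrellis vT) (T' : ltrellis wT) (f : 'I_n -> 'Hom(vT, wT)) : Prop :=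
  forall i,
    (f i @: tV T i)%VS = tV T' i /\
    {in tV T i &, injective (f i)} /\
    (forall v a w, v \in tV T i -> w \in tV T (succ i) ->
       ((v, a, w) \in tE T i) = ((f i v, a, f (succ i) w) \in tE T' i)).

Definition timage (f : 'I_n -> 'Hom(vT, wT)) (T'' : ltrellis vT) : ltrellis wT :=
  LTrellis (fun i => (f i @: tV T'' i)%VS)
           (fun i => (linfun (edge_map f i) @: tE T'' i)%VS).

Definition tpreim (T : ltrellis vT) (f : 'I_n -> 'Hom(vT, wT)) (T'' : ltrellis wT)
  : ltrellis vT :=
  LTrellis (fun i => (tV T i :&: f i @^-1: tV T'' i)%VS)
           (fun i => (tE T i :&: linfun (edge_map f i) @^-1: tE T'' i)%VS).
End Iso.

Definition same_trellis (vT : vectType F) (T1 T2 : ltrellis vT) : Prop :=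
  forall i, tV T1 i = tV T2 i /\ tE T1 i = tE T2 i.

End Trellis.

(* Sanity facts: the maps wrapped with linfun above are linear, so linfun
   does not alter them; in particular the cycle space is what it should be. *)
Section Linearity.
Variables (F : finFieldType) (n : nat) (vT wT : vectType F).

Fact edge_at_lin i : linear (@edge_at F n vT i).
Proof. by move=> a u v; rewrite /edge_at /= !ffunE. Qed.
Fact vert_at_lin i : linear (@vert_at F n vT i).
Proof. by move=> a u v; rewrite /vert_at /= !ffunE. Qed.
Fact outside_lin a l : linear (@outside F n vT a l).
Proof.
move=> b u v; rewrite /outside /=; congr (_, _); apply/ffunP=> i; rewrite !ffunE;
  by case: ifP; rewrite ?scaler0 ?addr0.
Qed.
Fact proj_lin (r : nat) (k : 'I_r) : linear (fun x : {ffun 'I_r -> vT} => x k).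
Proof. by move=> a u v; rewrite !ffunE. Qed.
Fact combine_lin r : linear (@combine F vT r).
Proof.
move=> a u v; rewrite /combine /=; congr (_, _, _); try (apply/ffunP=> k; rewrite !ffunE //).
by rewrite /= scaler_sumr -big_split; apply: eq_bigr => k _; rewrite !ffunE.
Qed.
Fact inj_at_lin r k : linear (@inj_at F vT r k).
Proof.
by move=> a u v; apply/ffunP=> j; rewrite !ffunE; case: ifP; rewrite ?scaler0 ?addr0.
Qed.
Fact injE_at_lin r k : linear (@injE_at F vT r k).
Proof. by move=> a u v; rewrite /injE_at /= !inj_at_lin. Qed.
Fact edge_map_lin (f : 'I_n -> 'Hom(vT, wT)) i : linear (edge_map f i).
Proof. by move=> a u v; rewrite /edge_map /= !linearP. Qed.

HB.instance Definition _ i :=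
  GRing.isLinear.Build F _ _ _ (@edge_at F n vT i) (edge_at_lin i).

Lemma edge_atE i : linfun (@edge_at F n vT i) =1 @edge_at F n vT i.
Proof. exact: (lfunE (GRing.Linear.clone _ _ _ _ (@edge_at F n vT i) _)). Qed.

Lemma mem_cycles (T : ltrellis n vT) c : c \in cycles T <-> is_cycle T c.
Proof.
split.
  rewrite memvE => /subv_bigcapP cT i.
  by have := cT i isT; rewrite -memvE -memv_preim edge_atE.
move=> cT; rewrite memvE; apply/subv_bigcapP => i _.
by rewrite -memvE -memv_preim edge_atE.
Qed.
End Linearity.

(* Main.v *)
Require Import Defs.
From HB Require Import structures.
From mathcomp Require Import all_boot all_order all_algebra.
From mathcomp Require Import zify.
Import GRing.Theory.
Local Open Scope ring_scope.

Module Aux.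
Set Implicit Arguments. Unset Strict Implicit. Unset Printing Implicit Defensive.

Section Aux.
Variables (F : finFieldType) (n : nat) (vT wT : vectType F).

HB.instance Definition _ i :=
  GRing.isLinear.Build F _ _ _ (@vert_at F n vT i) (vert_at_lin i).
HB.instance Definition _ a l :=
  GRing.isLinear.Build F _ _ _ (@outside F n vT a l) (outside_lin a l).
HB.instance Definition _ r k :=
  GRing.isLinear.Build F _ _ _ (@inj_at F vT r k) (inj_at_lin k).
HB.instance Definition _ r k :=
  GRing.isLinear.Build F _ _ _ (@injE_at F vT r k) (injE_at_lin k).
HB.instance Definition _ (f : 'I_n -> 'Hom(vT, wT)) i :=
  GRing.isLinear.Build F _ _ _ (@edge_map F n vT wT f i) (edge_map_lin f i).
HB.instance Definition _ r :=
  GRing.isLinear.Build F _ _ _ (@combine F vT r) (@combine_lin F vT r).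
Definition pkv r (k : 'I_r) (x : {ffun 'I_r -> vT}) := x k.
Definition pke r (k : 'I_r) (x : {ffun 'I_r -> edgeT vT}) := x k.
HB.instance Definition _ r k :=
  GRing.isLinear.Build F _ _ _ (@pkv r k) (proj_lin k).
HB.instance Definition _ r k :=
  GRing.isLinear.Build F _ _ _ (@pke r k) (proj_lin k).

Lemma vert_atE i : linfun (@vert_at F n vT i) =1 @vert_at F n vT i.
Proof. exact: (lfunE (GRing.Linear.clone _ _ _ _ (@vert_at F n vT i) _)). Qed.
Lemma outsideE a l : linfun (@outside F n vT a l) =1 @outside F n vT a l.
Proof. exact: (lfunE (GRing.Linear.clone _ _ _ _ (@outside F n vT a l) _)). Qed.
Lemma inj_atE r k : linfun (@inj_at F vT r k) =1 @inj_at F vT r k.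
Proof. exact: (lfunE (GRing.Linear.clone _ _ _ _ (@inj_at F vT r k) _)). Qed.
Lemma injE_atE r k : linfun (@injE_at F vT r k) =1 @injE_at F vT r k.
Proof. exact: (lfunE (GRing.Linear.clone _ _ _ _ (@injE_at F vT r k) _)). Qed.
Lemma edge_mapE f i : linfun (@edge_map F n vT wT f i) =1 @edge_map F n vT wT f i.
Proof. exact: (lfunE (GRing.Linear.clone _ _ _ _ (@edge_map F n vT wT f i) _)). Qed.
Lemma combineE r : linfun (@combine F vT r) =1 @combine F vT r.
Proof. exact: (lfunE (GRing.Linear.clone _ _ _ _ (@combine F vT r) _)). Qed.
Lemma projE r k : linfun (fun x : {ffun 'I_r -> vT} => x k) =1 (fun x => x k).
Proof. exact: (lfunE (GRing.Linear.clone _ _ _ _ (@pkv r k) _)). Qed.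
Lemma projEE r k : linfun (fun x : {ffun 'I_r -> edgeT vT} => x k) =1 (fun x => x k).
Proof. exact: (lfunE (GRing.Linear.clone _ _ _ _ (@pke r k) _)). Qed.
End Aux.

Lemma mem_bigcapP (K : fieldType) (aT : vectType K) (I : finType) (Us : I -> {vspace aT}) v :
  (v \in \bigcap_(i : I) Us i)%VS <-> forall i, v \in Us i.
Proof.
split.
  rewrite memvE => /subv_bigcapP cT i.
  by have := cT i isT; rewrite -memvE.
by move=> cT; rewrite memvE; apply/subv_bigcapP => i _; rewrite -memvE.
Qed.

Section Mod.
Variables (F : finFieldType) (n : nat).

Lemma dE (a j : 'I_n) : ((j + n - a) %% n = if (a <= j)%N then j - a else j + n - a)%N.
Proof.
have ha := ltn_ord a; have hj := ltn_ord j.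
case: leqP => h.
  have -> : (j + n - a = (j - a) + n)%N by lia.
  by rewrite modnDr modn_small //; lia.
by rewrite modn_small //; lia.
Qed.

Lemma succE (i : 'I_n) : val (succ i) = (if i.+1 == n then 0 else i.+1)%N.
Proof.
rewrite /succ /=; case: eqP => [->|h]; first by rewrite modnn.
by rewrite modn_small //; have := ltn_ord i; lia.
Qed.

Lemma ord_neqE (a b : 'I_n) : (a != b) = (val a != val b).
Proof. by []. Qed.

Lemma P1 (a j : 'I_n) : in_cc a (n.-1) j.
Proof. rewrite /in_cc dE; have := ltn_ord a; have := ltn_ord j; case: (leqP a j); lia. Qed.

Lemma P2 (a j : 'I_n) : in_oc a (n.-1) j = (j != a).
Proof.
rewrite /in_oc dE; have := ltn_ord a; have := ltn_ord j.
case: (leqP a j) => h1 h2 h3; apply/idP/idP; rewrite -val_eqE /=; lia.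
Qed.

Lemma P3cc (i j : 'I_n) : (1 < n)%N -> in_cc (succ i) (n - 2) j = (j != i).
Proof.
move=> n1; rewrite /in_cc dE; have := ltn_ord i; have := ltn_ord j.
have hs : (i.+1 %% n = if i.+1 == n then 0 else i.+1)%N := succE i.
case: (leqP (succ i) j) => /= h1 h2 h3; rewrite hs in h1 *; apply/idP/idP; rewrite -val_eqE /=;
 case: eqP h1 => hi h1; lia.
Qed.

Lemma P3oc (i j : 'I_n) : (1 < n)%N -> j != i -> j != succ i -> in_oc (succ i) (n - 2) j.
Proof.
move=> n1; rewrite /in_oc dE -!val_eqE /=; have := ltn_ord i; have := ltn_ord j.
have hs : (i.+1 %% n = if i.+1 == n then 0 else i.+1)%N := succE i.
case: (leqP (succ i) j) => /= h1 h2 h3 h4 h5; rewrite hs in h1 h5 *; case: eqP h1 h5 => hi h1 h5; lia.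
Qed.

Lemma P4cc (i : 'I_n) : in_cc i 0 i.
Proof. by rewrite /in_cc dE leqnn subnn. Qed.
Lemma P4oc (i j : 'I_n) : in_oc i 0 j = false.
Proof. by rewrite /in_oc; lia. Qed.
Lemma P4cc' (i j : 'I_n) : in_cc i 0 j -> j = i.
Proof.
rewrite /in_cc dE => h; apply: val_inj => /=; move: h.
have := ltn_ord i; have := ltn_ord j; case: (leqP i j); lia.
Qed.

Lemma P5a (a j : 'I_n) l : in_oc a l j -> in_cc a l j.
Proof. rewrite /in_oc /in_cc; lia. Qed.

Lemma P5b (a j : 'I_n) l : in_oc a l (succ j) -> in_cc a l j.
Proof.
rewrite /in_oc /in_cc !dE; have := ltn_ord a; have := ltn_ord j.
have hs : (j.+1 %% n = if j.+1 == n then 0 else j.+1)%N := succE j.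
case: (leqP a j); case: (leqP a (succ j)) => /=; rewrite hs; case: eqP; lia.
Qed.
End Mod.

Lemma sum_fst (A B : zmodType) (I : finType) (g : I -> (A * B)%type) :
  (\sum_i g i).1 = \sum_i (g i).1.
Proof. by apply: (big_morph fst). Qed.
Lemma sum_snd (A B : zmodType) (I : finType) (g : I -> (A * B)%type) :
  (\sum_i g i).2 = \sum_i (g i).2.
Proof. by apply: (big_morph snd). Qed.

Lemma inj_at_k (F : finFieldType) (vT : vectType F) r (k : 'I_r) (x : vT) :
  inj_at k x k = x.
Proof. by rewrite /inj_at ffunE eqxx. Qed.
Lemma inj_at_j (F : finFieldType) (vT : vectType F) r (k j : 'I_r) (x : vT) :
  j != k -> inj_at k x j = 0.
Proof. by rewrite /inj_at ffunE => /negPf ->. Qed.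

Lemma inj_at0 (F : finFieldType) (vT : vectType F) r (k : 'I_r) :
  inj_at k (0 : vT) = 0.
Proof. by apply/ffunP => j; rewrite /inj_at !ffunE; case: eqP. Qed.

Lemma zero_sum_inj (F : finFieldType) (vT : vectType F) r (g : 'I_r -> {ffun 'I_r -> vT}) :
  (forall k, exists x, g k = inj_at k x) -> \sum_k g k = 0 -> forall k, g k = 0.
Proof.
move=> hg hs k; have [x hx] := hg k.
have : (\sum_k g k) k = 0 by rewrite hs ffunE.
rewrite sum_ffunE (bigD1 k) //= big1 ?addr0 => [hk|j hj].
  by rewrite hx; rewrite hx inj_at_k in hk; rewrite hk; apply/ffunP => j; rewrite /inj_at !ffunE; case: eqP.
by have [y ->] := hg j; rewrite inj_at_j // eq_sym.
Qed.

Lemma mem_spanZ (F : finFieldType) (n : nat) (vT : vectType F) (a : 'I_n) l (c : cycT n vT) :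
  c \in spanZ vT (SpInt a l) <->
  forall j, (~~ in_oc a l j -> c.1 j = 0) /\ (~~ in_cc a l j -> c.2 j = 0).
Proof.
rewrite /spanZ memv_ker outsideE; split.
  move/eqP => h j; have h1 := congr1 (fun x : cycT n vT => x.1 j) h; have h2 := congr1 (fun x : cycT n vT => x.2 j) h.
  move: h1 h2; rewrite /= !ffunE.
  by case: (in_oc a l j); case: (in_cc a l j).
move=> h; apply/eqP; apply: injective_projections => /=; apply/ffunP => j; rewrite !ffunE; have [h1 h2] := h j.
  by case: ifP => // /negbT /h1.
by case: ifP => // /negbT /h2.
Qed.

Lemma combine_single (F : finFieldType) (vT : vectType F) r (k : 'I_r) (x : edgeT vT) :
  combine [ffun j => if j == k then x else 0] = injE_at k x.
Proof.
rewrite /combine /injE_at; congr (_, _, _).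
- by apply/ffunP => j; rewrite !ffunE; case: eqP.
- rewrite (bigD1 k) //= big1 ?addr0 => [|j /negPf hj]; by rewrite ffunE ?eqxx ?hj.
- by apply/ffunP => j; rewrite !ffunE; case: eqP.
Qed.

Lemma sum_inj_at (F : finFieldType) (vT : vectType F) r (x : {ffun 'I_r -> vT}) :
  \sum_k inj_at k (x k) = x.
Proof.
apply/ffunP => j; rewrite sum_ffunE (bigD1 j) //= big1 ?addr0 ?inj_at_k // => k hk.
by rewrite inj_at_j // eq_sym.
Qed.

Section Part2.
Variables (F : finFieldType) (n : nat) (vT wT : vectType F) (T : ltrellis n vT)
  (r : nat) (Ts : 'I_r -> ltrellis n wT) (f : 'I_n -> 'Hom(vT, {ffun 'I_r -> wT})).
Hypothesis wfT : wf_trellis T.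
Hypothesis hdim : forall a : 'I_n, (\sum_(k < r) \dim (Sspan (SpInt a 0) (Ts k)) <= 1)%N.
Hypothesis hf : is_liso T (prodT Ts) f.

Lemma edgeC k i e : e \in tE (tpreim T f (copyT Ts k)) i <->
  e \in tE T i /\ exists2 x, x \in tE (Ts k) i & edge_map f i e = injE_at k x.
Proof.
rewrite /= memv_cap -memv_preim edge_mapE; split.
  move=> /andP[h1 /memv_imgP[x hx ->]]; split => //; exists x => //; by rewrite injE_atE.
move=> [h1 [x hx ->]]; rewrite h1 /= -injE_atE; exact: memv_img.
Qed.

Lemma cycC k c : c \in cycles (tpreim T f (copyT Ts k)) -> c \in cycles T.
Proof.
by move/mem_cycles => h; apply/mem_cycles => i; have /edgeC[] := h i.
Qed.

Lemma dimpos k i (al : F) : al != 0 -> ((0, al, 0) : edgeT wT) \in tE (Ts k) i ->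
  (0 < \dim (Sspan (SpInt i 0) (Ts k)))%N.
Proof.
move=> hal he; rewrite lt0n dimv_eq0; apply/negP => /eqP h0.
pose d : cycT n wT := (0, [ffun j => if j == i then al else 0]).
have : d \in Sspan (SpInt i 0) (Ts k).
  rewrite memv_cap; apply/andP; split.
    apply/mem_cycles => j; rewrite /edge_at /= !ffunE.
    case: eqP => [->|_]; first by [].
    exact: mem0v.
  apply/mem_spanZ => j; split; first by rewrite ffunE.
  rewrite ffunE; case: eqP => // ->; by rewrite P4cc.
rewrite h0 memv0 => /eqP hd.
have := congr1 (fun x : cycT n wT => x.2 i) hd; rewrite /= !ffunE eqxx => hal0.
by move: hal; rewrite hal0 eqxx.
Qed.

Lemma labels_unique i (al : 'I_r -> F) :
  (forall k, ((0, al k, 0) : edgeT wT) \in tE (Ts k) i) -> \sum_k al k = 0 ->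
  forall k, al k = 0.
Proof.
move=> he hs k; apply/eqP; apply/negPn/negP => hk.
have others : forall j, j != k -> al j = 0.
  move=> j hj; apply/eqP; apply/negPn/negP => hj0.
  have := hdim i; rewrite (bigD1 k) //= (bigD1 j) //=.
  have := dimpos hk (he k); have := dimpos hj0 (he j); lia.
move: hs; rewrite (bigD1 k) //= big1 ?addr0 => [hk0|j /others //].
by move: hk; rewrite hk0 eqxx.
Qed.

Lemma indep (z : 'I_r -> cycT n vT) :
  (forall k, z k \in cycles (tpreim T f (copyT Ts k))) -> \sum_k z k = 0 ->
  forall k, z k = 0.
Proof.
move=> hz hs.
have hv : forall k i, (z k).1 i = 0.
  move=> k i.
  pose g k := f i ((z k).1 i).
  have hg : forall k, exists x, g k = inj_at k x.
    move=> k'; have /mem_cycles/(_ i)/edgeC[_ [x _ hx]] := hz k'.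
    by exists x.1.1; rewrite /g; case: hx => -> _ _.
  have hs' : \sum_k g k = 0.
    rewrite /g -linear_sum.
    have -> : \sum_k (z k).1 i = 0.
      by have := congr1 (fun x : cycT n vT => x.1 i) hs; rewrite /= sum_fst sum_ffunE ffunE.
    exact: linear0.
  have hk := zero_sum_inj hg hs' k.
  have [_ [hinj _]] := hf i.
  have hin : (z k).1 i \in tV T i.
    have /mem_cycles/(_ i)/edgeC[h _] := hz k.
    by have [] := wfT h.
  by apply: hinj => //; [exact: mem0v | rewrite -/(g k) hk linear0].
have hl : forall i k, (z k).2 i = 0.
  move=> i; apply: (@labels_unique i); last by have := congr1 (fun x : cycT n vT => x.2 i) hs; rewrite /= sum_snd sum_ffunE ffunE.
  move=> k; have /mem_cycles/(_ i)/edgeC[_ [x hx]] := hz k.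
  rewrite /edge_map /edge_at /= !hv !linear0 /injE_at.
  case: x hx => [[x1 x2] x3] hx [h1 h2 h3].
  have e1 : x1 = 0 by rewrite -(inj_at_k k x1) -h1 ffunE.
  have e3 : x3 = 0 by rewrite -(inj_at_k k x3) -h3 ffunE.
  by rewrite h2; rewrite e1 e3 in hx.
move=> k; apply: injective_projections => /=; apply/ffunP => i; rewrite ffunE.
  exact: hv.
exact: hl.
Qed.

Lemma decomp (c : cycT n vT) : c \in cycles T ->
  exists z : 'I_r -> cycT n vT,
    [/\ forall k, z k \in cycles (tpreim T f (copyT Ts k)), c = \sum_k z k &
      forall k i, ((z k).1 i != 0 -> c.1 i != 0) /\
        ((z k).2 i != 0 -> [|| c.2 i != 0, c.1 i != 0 | c.1 (succ i) != 0])].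
Proof.
move=> /mem_cycles hc.
have hci : forall i, c.1 i \in tV T i by move=> i; have [] := wfT (hc i).
have hfc : forall i, f i (c.1 i) \in tV (prodT Ts) i.
  by move=> i; have [<- _] := hf i; exact: memv_img.
have hfck : forall i k, f i (c.1 i) k \in tV (Ts k) i.
  move=> i k; have /mem_bigcapP/(_ k) := hfc i.
  by rewrite -memv_preim projE.
have hU : forall p : 'I_n * 'I_r, exists u,
    u \in tV T p.1 /\ f p.1 u = inj_at p.2 (f p.1 (c.1 p.1) p.2).
  move=> [i k] /=.
  have : inj_at k (f i (c.1 i) k) \in tV (prodT Ts) i.
    apply/mem_bigcapP => j; rewrite -memv_preim projE /inj_at ffunE.
    by case: eqP => [->|_]; [exact: hfck | exact: mem0v].
  have [<- _] := hf i; move/memv_imgP => [u hu ->]; by exists u.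
have [U hU'] := fin_all_exists hU.
have hE : forall i, exists e : {ffun 'I_r -> edgeT wT},
    (forall k, e k \in tE (Ts k) i) /\
    combine e = (f i (c.1 i), c.2 i, f (succ i) (c.1 (succ i))).
  move=> i; have [_ [_ he]] := hf i.
  have := hc i; rewrite (he _ _ _ (hci i) (hci (succ i))) /=.
  move/memv_imgP => [e /mem_bigcapP hek ->]; exists e; split; last by rewrite combineE.
  by move=> k; have := hek k; rewrite -memv_preim projEE.
have [E hE'] := fin_all_exists hE.
pose deg i := [&& c.2 i == 0, c.1 i == 0 & c.1 (succ i) == 0].
pose z k : cycT n vT := ([ffun i => U (i, k)], [ffun i => if deg i then 0 else (E i k).1.2]).
have Uin : forall i k, U (i, k) \in tV T i by move=> i k; have [] := hU' (i, k).
have fU : forall i k, f i (U (i, k)) = inj_at k (f i (c.1 i) k) by move=> i k; have [] := hU' (i, k).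
have Ua : forall i k, c.1 i = 0 -> U (i, k) = 0.
  move=> i k h0; have [_ [hinj _]] := hf i.
  apply: hinj => //; first exact: mem0v.
  rewrite fU h0 !linear0 ffunE; apply/ffunP => j; rewrite /inj_at !ffunE.
  by case: eqP.
have Ub : forall i, \sum_k U (i, k) = c.1 i.
  move=> i; have [_ [hinj _]] := hf i.
  apply: hinj => //; first by apply: rpred_sum => k _; exact: Uin.
  transitivity (\sum_k inj_at k (f i (c.1 i) k)); last exact: sum_inj_at.
  by rewrite linear_sum; apply: eq_bigr => k _; exact: fU.
have E1 : forall i k, (E i k).1.1 = f i (c.1 i) k.
  move=> i k; have [_ h] := hE' i.
  by have := congr1 (fun x : edgeT {ffun 'I_r -> wT} => x.1.1 k) h; rewrite /= ffunE.
have E3 : forall i k, (E i k).2 = f (succ i) (c.1 (succ i)) k.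
  move=> i k; have [_ h] := hE' i.
  by have := congr1 (fun x : edgeT {ffun 'I_r -> wT} => x.2 k) h; rewrite /= ffunE.
have E2 : forall i, \sum_k (E i k).1.2 = c.2 i.
  move=> i; have [_ h] := hE' i.
  by have := congr1 (fun x : edgeT {ffun 'I_r -> wT} => x.1.2) h.
exists z; split.
- move=> k; apply/mem_cycles => i; apply/edgeC.
  pose x : edgeT wT := if deg i then 0 else E i k.
  have hx : x \in tE (Ts k) i.
    rewrite /x; case: (deg i); first exact: mem0v.
    by have [] := hE' i.
  have hem : edge_map f i (edge_at i (z k)) = injE_at k x.
    rewrite /edge_map /edge_at /injE_at /= !ffunE !fU /x.
    case hd : (deg i).
      move/and3P: hd => [_ /eqP -> /eqP ->]; by rewrite !linear0 !ffunE !inj_at0.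
    by rewrite E1 E3.
  split; last by exists x.
  have [_ [_ he]] := hf i.
  rewrite /edge_at /= !ffunE (he _ _ _ (Uin i k) (Uin (succ i) k)).
  move: hem; rewrite /edge_map /edge_at /= !ffunE => ->.
  rewrite -combine_single -combineE; apply: memv_img; apply/mem_bigcapP => j.
  rewrite -memv_preim projEE ffunE; case: eqP => [->|_]; [exact: hx | exact: mem0v].
- apply: injective_projections; apply/ffunP => i; rewrite ?sum_fst ?sum_snd sum_ffunE.
    by rewrite -Ub; apply: eq_bigr => k _; rewrite ffunE.
  under eq_bigr => k _ do rewrite ffunE.
  case hd : (deg i); last exact/esym/E2.
  by rewrite big1 //; move/and3P: hd => [/eqP -> _ _].
- move=> k i; rewrite !ffunE; split.
    by apply: contraNN => /eqP /(Ua i k) ->.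
  case hd : (deg i); first by rewrite eqxx.
  by move=> _; move/negbT: hd; rewrite /deg !negb_and.
Qed.

Lemma part2 (s : tspan n) : valid_span s ->
  Sspan s T = (\sum_(k < r) Sspan s (tpreim T f (copyT Ts k)))%VS /\
  directv (\sum_(k < r) Sspan s (tpreim T f (copyT Ts k)))%VS.
Proof.
move=> _; split.
  apply/eqP; rewrite eqEsubv; apply/andP; split.
    apply/subvP => c /memv_capP [hc hs].
    have [z [hz hcz hsp]] := decomp hc.
    rewrite hcz; apply: memv_sumr => k _; rewrite memv_cap hz /=.
    case: s hs => [|| a l] hs /=.
    - rewrite memv0; move: hs; rewrite memv0 hcz => /eqP hs0.
      by rewrite (indep hz hs0).
    - exact: memvf.
    - move/mem_spanZ: hs => hs; apply/mem_spanZ => j; split.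
        move=> hj; apply/eqP/negPn/negP => hz0; have := proj1 (hsp k j) hz0.
        by rewrite (proj1 (hs j) hj) eqxx.
      move=> hj; apply/eqP/negPn/negP => hz0; case/or3P: (proj2 (hsp k j) hz0) => h.
      + by move: h; rewrite (proj2 (hs j) hj) eqxx.
      + have hj' : ~~ in_oc a l j by apply: contra hj; apply: P5a.
        by move: h; rewrite (proj1 (hs j) hj') eqxx.
      + have hj' : ~~ in_oc a l (succ j) by apply: contra hj; apply: P5b.
        by move: h; rewrite (proj1 (hs (succ j)) hj') eqxx.
  apply/subv_sumP => k _; apply/subvP => c /memv_capP [h1 h2].
  by rewrite memv_cap h2 (cycC h1).
apply/directv_sum_independent => z hz hs k _.
apply: (indep (z := z)) => // j; by have /memv_capP[] := hz j isT.
Qed.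
End Part2.

Section Part1.
Variables (F : finFieldType) (n : nat) (vT : vectType F) (T : ltrellis n vT)
  (r : nat) (S : 'I_r -> {vspace cycT n vT}).
Hypothesis n0 : (0 < n)%N.
Hypothesis hT : is_trellis T.
Hypothesis redT : reduced T.
Hypothesis hS : forall k, (S k <= cycles T)%VS.
Hypothesis hsp : forall s : tspan n, valid_span s ->
        Sspan s T = (\sum_(k < r) (S k :&: Sspan s T))%VS /\
        directv (\sum_(k < r) (S k :&: Sspan s T))%VS.

Lemma SinT k c : c \in S k -> c \in cycles T.
Proof. by move=> h; apply: (subvP (hS k)). Qed.

Lemma decompT c : c \in cycles T -> exists2 x : 'I_r -> cycT n vT,
  (forall k, x k \in S k) & c = \sum_k x k.
Proof.
move=> hc; have : c \in Sspan (SpFull n) T by rewrite memv_cap hc memvf.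
rewrite (hsp (s := (SpFull n)) I).1 => /memv_sumP [x hx ->]; exists x => // k.
by have /memv_capP[] := hx k isT.
Qed.

Lemma indepS (x : 'I_r -> cycT n vT) : (forall k, x k \in S k) -> \sum_k x k = 0 ->
  forall k, x k = 0.
Proof.
move=> hx hs k; have /directv_sum_independent hd := (hsp (s := (SpFull n)) I).2.
apply: hd => // j _; by rewrite memv_cap hx memv_cap (@SinT j) ?hx ?memvf.
Qed.

Lemma Dir s (x : 'I_r -> cycT n vT) : valid_span s -> (forall k, x k \in S k) ->
  \sum_k x k \in spanZ vT s -> forall k, x k \in spanZ vT s.
Proof.
move=> vs hx hs k.
have : \sum_k x k \in Sspan s T.
  by rewrite memv_cap hs andbT; apply: rpred_sum => j _; apply: SinT.
rewrite (hsp vs).1 => /memv_sumP [y hy hxy].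
have hy' : forall j, y j \in S j /\ y j \in Sspan s T.
  by move=> j; have /memv_capP[] := hy j isT.
have e := @indepS (fun j => x j - y j).
have -> : x k = y k.
  apply/eqP; rewrite -subr_eq0; apply/eqP; apply: e => [j|].
    by apply: memvB; [exact: hx | exact: (hy' j).1].
  by rewrite sumrB hxy subrr.
by have /memv_capP[] := (hy' k).2.
Qed.

Lemma VD (x : 'I_r -> cycT n vT) i : (forall k, x k \in S k) ->
  (\sum_k x k).1 i = 0 -> forall k, (x k).1 i = 0.
Proof.
move=> hx h0 k.
have vs : valid_span (SpInt i n.-1) by rewrite /=; lia.
have := Dir vs hx _ k; rewrite !mem_spanZ => /(_ _) /(_ i) [].
  move=> j; split; first by rewrite P2 negbK => /eqP ->.
  by rewrite P1.
by move=> -> //; rewrite P2 eqxx.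
Qed.

Lemma ED (x : 'I_r -> cycT n vT) i : (forall k, x k \in S k) ->
  (\sum_k x k).1 i = 0 -> (\sum_k x k).2 i = 0 -> (\sum_k x k).1 (succ i) = 0 ->
  forall k, (x k).2 i = 0.
Proof.
move=> hx h1 h2 h3 k.
have [n1|n1] := leqP n 1.
  have eqi : forall j : 'I_n, j = i.
    by move=> j; apply: val_inj => /=; have := ltn_ord j; have := ltn_ord i; lia.
  have hs0 : \sum_k x k = 0.
    apply: injective_projections; apply/ffunP => j; rewrite (eqi j) ffunE.
      exact: h1.
    exact: h2.
  by rewrite (indepS hx hs0 k) ffunE.
have vs : valid_span (SpInt (succ i) (n - 2)) by rewrite /=; lia.
have := Dir vs hx _ k; rewrite !mem_spanZ => /(_ _) /(_ i) [].
  move=> j; split.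
    move=> hj; have [->//|ji] := eqVneq j i.
    have [->//|jsi] := eqVneq j (succ i).
    by move: hj; rewrite P3oc.
  by rewrite P3cc // negbK => /eqP ->.
by move=> _ -> //; rewrite P3cc // eqxx.
Qed.

Definition W i k := (linfun (@vert_at F n vT i) @: S k)%VS.
Definition pi i : 'I_r -> 'End(vT) := sumv_pi_for (erefl (\sum_(k < r) W i k)%VS).
Definition fT i : 'Hom(vT, {ffun 'I_r -> vT}) :=
  (\sum_(k < r) (linfun (@inj_at F vT r k) \o pi i k))%VF.

Lemma fE i v j : fT i v j = pi i j v.
Proof.
rewrite /fT sum_lfunE sum_ffunE (bigD1 j) //= big1 ?addr0.
  by rewrite comp_lfunE inj_atE inj_at_k.
by move=> k hk; rewrite comp_lfunE inj_atE inj_at_j // eq_sym.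
Qed.

Lemma memW i k v : v \in W i k <-> exists2 c, c \in S k & v = c.1 i.
Proof.
split; first by move/memv_imgP => [c hc ->]; exists c => //; rewrite vert_atE.
by move=> [c hc ->]; rewrite -[c.1 i]/(vert_at i c) -vert_atE; exact: memv_img.
Qed.

Lemma piW i k v : pi i k v \in W i k.
Proof. exact: memv_sum_pi. Qed.

Lemma WinV i k v : v \in W i k -> v \in tV T i.
Proof.
move/memW => [c /SinT /mem_cycles hc ->].
by have [] := hT.1 _ _ _ _ (hc i).
Qed.

Lemma VinW i v : v \in tV T i -> v \in (\sum_(k < r) W i k)%VS.
Proof.
move=> hv; have [a [w he]] := hT.2.1 _ _ hv.
have [c [hc hce]] := redT he.
have [x hx hcx] := decompT (proj2 (mem_cycles T c) hc).
have -> : v = \sum_k (x k).1 i.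
  by have := congr1 (fun e : edgeT vT => e.1.1) hce; rewrite /= hcx sum_fst sum_ffunE => <-.
apply: memv_sumr => k _; apply/memW; by exists (x k).
Qed.

Lemma pi_sum i v : v \in tV T i -> \sum_k pi i k v = v.
Proof. by move/VinW; apply: sumv_pi_sum. Qed.

Lemma pi_uniq i (x : 'I_r -> cycT n vT) : (forall k, x k \in S k) ->
  forall k, pi i k (\sum_j (x j).1 i) = (x k).1 i.
Proof.
move=> hx k; set v := \sum_j (x j).1 i.
have hd : forall j, exists2 d, d \in S j & pi i j v = d.1 i.
  by move=> j; apply/memW; exact: piW.
have hd' : forall j, exists d, d \in S j /\ pi i j v = d.1 i.
  by move=> j; have [d h1 h2] := hd j; exists d.
have [D hD] := fin_all_exists hd'.
have hv : v \in tV T i.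
  by apply: rpred_sum => j _; apply: (@WinV i j); apply/memW; exists (x j).
have hsD : \sum_j (D j).1 i = v.
  rewrite -[RHS](pi_sum hv); apply: eq_bigr => j _; by have [_ ->] := hD j.
have := @VD (fun j => x j - D j) i _ _ k.
have h1 : forall j, x j - D j \in S j.
  by move=> j; apply: memvB => //; exact: (proj1 (hD j)).
have h2 : (\sum_j (x j - D j)).1 i = 0.
  rewrite sumrB /= !ffunE sum_fst sum_ffunE -/v.
  by rewrite sum_fst sum_ffunE hsD subrr.
move=> /(_ h1 h2) /=; rewrite !ffunE => /eqP; rewrite subr_eq0 => /eqP ->.
by have [_ ->] := hD k.
Qed.

Lemma pi_single i k c : c \in S k -> forall j, pi i j (c.1 i) = if j == k then c.1 i else 0.
Proof.
move=> hc j.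
pose x m : cycT n vT := if m == k then c else 0.
have hx : forall m, x m \in S m.
  by move=> m; rewrite /x; case: eqP => [->//|_]; exact: mem0v.
have e : c.1 i = \sum_m (x m).1 i.
  rewrite (bigD1 k) //= big1 ?addr0; first by rewrite /x eqxx.
  by move=> m /negPf hm; rewrite /x hm ffunE.
rewrite {1}e pi_uniq // /x; by case: (j == k); rewrite ?ffunE.
Qed.

Lemma cyc_tsub k : cycles (tsub T (S k)) = S k.
Proof.
apply/vspaceP => c; apply/idP/idP; last first.
  move=> hc; apply/mem_cycles => i /=; rewrite -(edge_atE _ c); exact: memv_img.
move/mem_cycles => hc.
have hD : forall i, exists d, d \in S k /\ edge_at i c = edge_at i d.
  move=> i; have /memv_imgP [d hd he] := hc i.
  by exists d; rewrite he edge_atE.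
have [D hD'] := fin_all_exists hD.
have hcT : c \in cycles T.
  apply/mem_cycles => i; have [hd ->] := hD' i.
  by have /mem_cycles := SinT hd; apply.
have [x hx hcx] := decompT hcT.
have x0 : forall j, j != k -> x j = 0.
  move=> j hj.
  have main : forall i, (x j).1 i = 0 /\ (x j).2 i = 0.
    move=> i; have [hd he] := hD' i.
    pose y m := x m - (if m == k then D i else 0).
    have hy : forall m, y m \in S m.
      move=> m; apply: memvB => //; case: eqP => [->//|_]; exact: mem0v.
    have hsy : \sum_m y m = c - D i.
      rewrite sumrB -hcx (bigD1 k) //= eqxx big1 ?addr0 // => m /negPf ->.
      by [].
    have hyj : y j = x j by rewrite /y (negPf hj) subr0.
    have ec := congr1 (fun e : edgeT vT => e.1.1) he.
    have el := congr1 (fun e : edgeT vT => e.1.2) he.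
    have es := congr1 (fun e : edgeT vT => e.2) he.
    move: ec el es => /= ec el es.
    have s1 : (\sum_m y m).1 i = 0 by rewrite hsy /= !ffunE ec subrr.
    have s2 : (\sum_m y m).2 i = 0 by rewrite hsy /= !ffunE el subrr.
    have s3 : (\sum_m y m).1 (succ i) = 0 by rewrite hsy /= !ffunE es subrr.
    split; rewrite -hyj; [exact: VD hy s1 j | exact: ED hy s1 s2 s3 j].
  by apply: injective_projections; apply/ffunP => i; rewrite ffunE; case: (main i).
rewrite hcx (bigD1 k) //= big1 ?addr0 ?hx // => j; exact: x0.
Qed.

Lemma iso1 : is_liso T (prodT (fun k => tsub T (S k))) fT.
Proof.
move=> i; split; [|split].
- apply/vspaceP => x; apply/idP/idP.
    move/memv_imgP => [v hv ->]; apply/mem_bigcapP => k.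
    by rewrite -memv_preim projE fE; exact: piW.
  move/mem_bigcapP => hx.
  have hX : forall k, exists c, c \in S k /\ x k = c.1 i.
    move=> k; have := hx k; rewrite -memv_preim projE => /memW [c hc ->].
    by exists c.
  have [X hX'] := fin_all_exists hX.
  have hv : \sum_k (X k).1 i \in tV T i.
    apply: rpred_sum => k _; apply: (@WinV i k); apply/memW; exists (X k) => //.
    exact: (proj1 (hX' k)).
  have -> : x = fT i (\sum_k (X k).1 i).
    apply/ffunP => k; rewrite fE pi_uniq; first by have [_ ->] := hX' k.
    by move=> j; exact: (proj1 (hX' j)).
  exact: memv_img.
- move=> u v hu hv he.
  have huv : u - v \in tV T i by apply: memvB.
  apply/eqP; rewrite -subr_eq0; apply/eqP.
  rewrite -(pi_sum huv) big1 // => k _.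
  have := congr1 (fun y : {ffun 'I_r -> vT} => y k) he.
  by rewrite /= !fE => h; rewrite linearB /= h subrr.
move=> v a w hv hw; apply/idP/idP.
  move=> he; have [c [hc hce]] := redT he.
  have [x hx hcx] := decompT (proj2 (mem_cycles T c) hc).
  have ev : v = \sum_k (x k).1 i.
    by have := congr1 (fun e : edgeT vT => e.1.1) hce; rewrite /= hcx sum_fst sum_ffunE => <-.
  have ea : a = \sum_k (x k).2 i.
    by have := congr1 (fun e : edgeT vT => e.1.2) hce; rewrite /= hcx sum_snd sum_ffunE => <-.
  have ew : w = \sum_k (x k).1 (succ i).
    by have := congr1 (fun e : edgeT vT => e.2) hce; rewrite /= hcx sum_fst sum_ffunE => <-.
  pose e := [ffun k => edge_at i (x k)].
  have -> : (fT i v, a, fT (succ i) w) = combine e.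
    rewrite /combine; congr (_, _, _).
    - by apply/ffunP => k; rewrite !ffunE fE ev pi_uniq.
    - by rewrite ea; apply: eq_bigr => k _; rewrite ffunE.
    - by apply/ffunP => k; rewrite !ffunE fE ew pi_uniq.
  rewrite /= -combineE; apply: memv_img; apply/mem_bigcapP => k.
  rewrite -memv_preim projEE ffunE /= -(edge_atE _ (x k)); exact: memv_img.
rewrite /= => /memv_imgP [e /mem_bigcapP he]; rewrite combineE => hce.
have hd : forall k, exists d, d \in S k /\ e k = edge_at i d.
  move=> k; have := he k; rewrite -memv_preim projEE /= => /memv_imgP [d hd ->].
  by exists d; rewrite edge_atE.
have [D hD] := fin_all_exists hd.
have hdT : \sum_k D k \in cycles T.
  by apply: rpred_sum => k _; apply: (@SinT k); exact: (proj1 (hD k)).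
have ec : forall k, (e k).1.1 = pi i k v.
  by move=> k; have := congr1 (fun x : edgeT {ffun 'I_r -> vT} => x.1.1 k) hce; rewrite /= fE ffunE.
have es : forall k, (e k).2 = pi (succ i) k w.
  by move=> k; have := congr1 (fun x : edgeT {ffun 'I_r -> vT} => x.2 k) hce; rewrite /= fE ffunE.
have el : \sum_k (e k).1.2 = a.
  by have := congr1 (fun x : edgeT {ffun 'I_r -> vT} => x.1.2) hce.
have -> : (v, a, w) = edge_at i (\sum_k D k).
  rewrite /edge_at sum_fst sum_snd !sum_ffunE; congr (_, _, _).
  - rewrite -[LHS](pi_sum hv); apply: eq_bigr => k _; by rewrite -ec (proj2 (hD k)).
  - rewrite -el; apply: eq_bigr => k _; by rewrite (proj2 (hD k)).
  - rewrite -[LHS](pi_sum hw); apply: eq_bigr => k _; by rewrite -es (proj2 (hD k)).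
by move/mem_cycles: hdT; apply.
Qed.

Lemma copies k : same_trellis (timage fT (tsub T (S k))) (copyT (fun k => tsub T (S k)) k).
Proof.
move=> i; split => /=.
  apply: eq_in_limg => v /memW [c hc ->]; rewrite inj_atE.
  by apply/ffunP => j; rewrite fE (pi_single i hc) /inj_at ffunE.
apply: eq_in_limg => e /memv_imgP [c hc ->]; rewrite edge_atE edge_mapE injE_atE.
rewrite /edge_map /injE_at /edge_at /=; congr (_, _, _); apply/ffunP => j;
  by rewrite fE (pi_single _ hc) /inj_at ffunE.
Qed.
End Part1.

End Aux.
Import Aux.

Theorem mainTheorem4 (F : finFieldType) (n : nat) (vT : vectType F)
    (T : ltrellis n vT) :
  (0 < n)%N -> is_trellis T -> reduced T ->
  (* (1) *)
  (forall (r : nat) (S : 'I_r -> {vspace cycT n vT}),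
     (forall k, (S k <= cycles T)%VS) ->
     (forall s : tspan n, valid_span s ->
        Sspan s T = (\sum_(k < r) (S k :&: Sspan s T))%VS /\
        directv (\sum_(k < r) (S k :&: Sspan s T))%VS) ->
     (forall k, cycles (tsub T (S k)) = S k) /\
     exists f : 'I_n -> 'Hom(vT, {ffun 'I_r -> vT}),
       is_liso T (prodT (fun k => tsub T (S k))) f /\
       forall k, same_trellis (timage f (tsub T (S k)))
                              (copyT (fun k => tsub T (S k)) k)) /\
  (* (2) *)
  (forall (wT : vectType F) (r : nat) (Ts : 'I_r -> ltrellis n wT)
          (f : 'I_n -> 'Hom(vT, {ffun 'I_r -> wT})),
     (forall k, is_trellis (Ts k)) ->
     (forall a : 'I_n, (\sum_(k < r) \dim (Sspan (SpInt a 0) (Ts k)) <= 1)%N) ->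
     is_liso T (prodT Ts) f ->
     forall s : tspan n, valid_span s ->
       Sspan s T = (\sum_(k < r) Sspan s (tpreim T f (copyT Ts k)))%VS /\
       directv (\sum_(k < r) Sspan s (tpreim T f (copyT Ts k)))%VS).
Proof.
move=> n0 hT redT; split.
  move=> r S hS hsp; split.
    by move=> k; apply: cyc_tsub.
  exists (fT S); split; first by apply: iso1.
  by move=> k; apply: copies.
move=> wT r Ts f hTs hdim hf s vs.
by apply: part2 => //; exact: hT.1.
Qed.
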